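(* Let $\mathcal{N}$ be a sound, acyclic, deterministic negotiation and $B\subseteq N$, and suppose Eve has a deterministic positional winning strategy $\sigma$ in the game $G(\mathcal{N},B)$. Let $S$ be the set of nodes of $\mathcal{N}$ that are reached on some play from $n_{\mathit{init}}$ respecting $\sigma$. Then there exists a successful run of $\mathcal{N}$ whose set of occurring nodes is precisely $S$.
   Context: A negotiation is a tuple $\mathcal{N}=(\mathit{Proc},N,\mathit{dom},R,\delta)$ where $\mathit{Proc}$ is a finite set of processes, $N$ is a finite set of nodes, $\mathit{dom}:N\to 2^{\mathit{Proc}}\setminus\{\emptyset\}$, there are two distinguished nodes $n_{\mathit{init}},n_{\mathit{fin}}$ with $\mathit{dom}(n_{\mathit{init}})=\mathit{dom}(n_{\mathit{fin}})=\mathit{Proc}$, $R$ is a set of results, each node $n$ has a set $\mathit{out}(n)\subseteq R$ of results (nonempty for $n\neq n_{\mathit{fin}}$), and $\delta(n,a,p)\subseteq N$ is defined and nonempty exactly when $a\in\mathit{out}(n)$ and $p\in\mathit{dom}(n)$, with $p\in\mathit{dom}(n')$ for all $n'\in\delta(n,a,p)$. $\mathcal{N}$ is deterministic if every $\delta(n,a,p)$ is a singleton, identified with its element. A configuration is a map $C$ assigning to each process a nonempty set of nodes; $C_{\mathit{init}}(p)=\{n_{\mathit{init}}\}$, $C_{\mathit{fin}}(p)=\{n_{\mathit{fin}}\}$. A node $n$ is enabled in $C$ if $n\in C(p)$ for all $p\in\mathit{dom}(n)$. If $n$ is enabled and $a\in\mathit{out}(n)$ then $C\xrightarrow{(n,a)}C'$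 with $C'(p)=\delta(n,a,p)$ for $p\in\mathit{dom}(n)$, $C'(p)=C(p)$ otherwise. A run is a sequence $(n_1,a_1)(n_2,a_2)\cdots$ of such steps; a successful run is a finite run from $C_{\mathit{init}}$ to $C_{\mathit{fin}}$; $\mathcal{N}$ is sound if every finite run from $C_{\mathit{init}}$ can be extended to a successful run. The graph of $\mathcal{N}$ has vertex set $N$ and edges $n\to n'$ whenever $n'\in\delta(n,a,p)$ for some $a,p$; $\mathcal{N}$ is acyclic if this graph is. The two-player game $G(\mathcal{N},B)$ (players Eve and Adam) for deterministic $\mathcal{N}$ and $B\subseteq N$: Eve's positions are $N\setminus B$, Adam's positions are $N\times R$; the moves are $n\to(n,a)$ for $n\in N\setminus B$, $a\in\mathit{out}(n)$, and $(n,a)\to\delta(n,a,p)$ for $n\in N$, $a\in\mathit{out}(n)$, $p\in\mathit{dom}(n)$. The initial position is $n_{\mathit{init}}$; a play is a maximal path from it. Adam wins a play if it reaches a node of $B$; Eve wins if it reaches $n_{\mathit{fin}}$. A deterministic positional strategy for Eve is a function $\sigma:N\to R$ (with $\sigma(n)\in\mathit{out}(n)$); a play respects $\sigma$ if from each Eve position $n$ it moves to $(n,\sigma(n))$; $\sigma$ is winning if every play from $n_{\mathit{init}}$ respecting $\sigma$ is won by Eve. *)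

(* Defs.v *)
From HB Require Import structures.
From mathcomp Require Import all_boot.
Set Warnings "-notation-overridden".
Set Implicit Arguments. Unset Strict Implicit. Unset Printing Implicit Defensive.

Section Negotiations.
Variables (Proc N R : finType).

Record negotiation := Negotiation {
  dom   : N -> {set Proc};
  ninit : N;
  nfin  : N;
  out   : N -> {set R};
  delta : N -> R -> Proc -> {set N}
}.

Variable G : negotiation.

Definition wf_negotiation : Prop :=
  (forall n, dom G n != set0) /\
  dom G (ninit G) = setT /\
  dom G (nfin G) = setT /\
  out G (nfin G) = set0 /\
  (forall n, n != nfin G -> out G n != set0) /\
  (forall n a p, (delta G n a p != set0) = (a \in out G n) && (p \in dom G n)) /\
  (forall n a p n', n' \in delta G n a p -> p \in dom G n').

Definition deterministic : Prop :=
  forall n a p, a \in out G n -> p \in dom G n -> #|delta G n a p| = 1.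

Definition config := {ffun Proc -> {set N}}.
Definition Cinit : config := [ffun _ => [set ninit G]].
Definition Cfin  : config := [ffun _ => [set nfin G]].

Definition enabled (C : config) (n : N) : bool := [forall p in dom G n, n \in C p].

Definition next (C : config) (n : N) (a : R) : config :=
  [ffun p => if p \in dom G n then delta G n a p else C p].

Fixpoint is_run (C : config) (s : seq (N * R)) (C' : config) : Prop :=
  match s with
  | [::] => C = C'
  | (n, a) :: s' => [/\ enabled C n, a \in out G n & is_run (next C n a) s' C']
  end.

Definition successful_run (s : seq (N * R)) : Prop := is_run Cinit s Cfin.

Definition sound : Prop :=
  forall s C, is_run Cinit s C -> exists s', is_run C s' Cfin.

Definition graph_edge : rel N :=
  fun n n' => [exists a, exists p, n' \in delta G n a p].

Definition acyclic : Prop :=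
  forall n n', graph_edge n n' -> ~~ connect graph_edge n' n.

(* The game G(N, B): Eve's positions are nodes (inl n), Adam's are pairs (inr (n,a)). *)
Definition position := (N + (N * R))%type.

Definition move (B : {set N}) : rel position :=
  fun x y =>
    match x, y with
    | inl n, inr (n', a) => [&& n' == n, n \notin B & a \in out G n]
    | inr (n, a), inl n' =>
        (a \in out G n) && [exists p, (p \in dom G n) && (n' \in delta G n a p)]
    | _, _ => false
    end.

Definition strategy (sigma : N -> R) : Prop :=
  forall n, n != nfin G -> sigma n \in out G n.

Definition respects (sigma : N -> R) (x y : position) : bool :=
  if x is inl n then y == inr (n, sigma n) else true.

(* finite maximal plays from n_init respecting sigma, given as the sequence of
   positions after the initial one *)
Definition fin_play (B : {set N}) (sigma : N -> R) (s : seq position) : Prop :=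
  [/\ path (fun x y => move B x y && respects sigma x y) (inl (ninit G)) s
    & forall y, ~~ move B (last (inl (ninit G)) s) y].

Definition inf_play (B : {set N}) (sigma : N -> R) (f : nat -> position) : Prop :=
  f 0 = inl (ninit G) /\ forall i, move B (f i) (f i.+1) && respects sigma (f i) (f i.+1).

(* Eve wins a play if it reaches n_fin (and no node of B). Infinite plays never
   reach n_fin (it has no results, hence no moves), so they are not won by Eve. *)
Definition eve_wins_fin (B : {set N}) (s : seq position) : bool :=
  (inl (nfin G) \in inl (ninit G) :: s)
  && all (fun x => if x is inl n then n \notin B else true) (inl (ninit G) :: s).

Definition winning (B : {set N}) (sigma : N -> R) : Prop :=
  strategy sigma /\
  (forall s, fin_play B sigma s -> eve_wins_fin B s) /\
  (forall f, ~ inf_play B sigma f).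

Definition reached (B : {set N}) (sigma : N -> R) (n : N) : Prop :=
  (exists s, fin_play B sigma s /\ inl n \in inl (ninit G) :: s) \/
  (exists f, inf_play B sigma f /\ exists i, f i = inl n).

End Negotiations.

(* Main.v *)
Require Import Defs.
From HB Require Import structures.
From mathcomp Require Import all_boot.
From mathcomp Require Import zify.
From Stdlib Require Import Classical.
Set Implicit Arguments. Unset Strict Implicit. Unset Printing Implicit Defensive.

Section Proof.
Variables (Proc N R : finType) (G : negotiation Proc N R) (B : {set N}) (sigma : N -> R).
Hypotheses (Hwf : wf_negotiation G) (Hsound : sound G) (Hacy : acyclic G)
  (Hdet : deterministic G) (Hwin : winning G B sigma).

Definition rank (m : N) := #|[set x | connect (graph_edge G) m x]|.

Lemma rank_lt m m' : graph_edge G m m' -> rank m' < rank m.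
Proof.
move=> e; apply: proper_card; apply/properP; split.
  apply/subsetP => x; rewrite !inE => H; exact: connect_trans (connect1 e) H.
exists m; rewrite !inE ?connect0 //; exact: Hacy.
Qed.

Lemma out_fin : out G (nfin G) = set0.
Proof. by case: Hwf => _ [_ [_ [H _]]]. Qed.

Lemma dom_ne n : dom G n != set0.
Proof. by case: Hwf. Qed.

Lemma not_fin_of_out n a : a \in out G n -> n != nfin G.
Proof. by apply: contraTneq => ->; rewrite out_fin inE. Qed.

Lemma strat n : n != nfin G -> sigma n \in out G n.
Proof. by case: Hwin => H _; exact: H. Qed.

Definition mr (x y : position N R) := move G B x y && respects sigma x y.

Definition gm (x : position N R) := match x with
  | inl m => (rank m).*2.+1 | inr (m, _) => (rank m).*2 end.

Lemma edge_of n a p n' : n' \in delta G n a p -> graph_edge G n n'.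
Proof. by move=> H; apply/existsP; exists a; apply/existsP; exists p. Qed.

Lemma step x y : move G B x y -> exists2 y', mr x y' & gm y' < gm x.
Proof.
case: x => [m|[m a]]; case: y => [m'|[m' a']] //=.
  case/and3P => _ nB ao.
  have nf := not_fin_of_out ao.
  exists (inr (m, sigma m)); last by rewrite /= ltnSn.
  by rewrite /mr /= eqxx nB strat //= eqxx.
case/andP => ao /existsP [p /andP [pd H]].
exists (inl m'); first by rewrite /mr /= ao andbT; apply/existsP; exists p; rewrite pd H.
have := rank_lt (edge_of H); rewrite /=; lia.
Qed.

Lemma extend x : exists t, path mr x t /\ forall y, ~~ move G B (last x t) y.
Proof.
have [k Hk] := ubnP (gm x); elim: k x Hk => [//|k IH] x Hk.
case: (boolP [exists y, move G B x y]) => [/existsP [y /step [y' my' lt]]|].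
  have [|t [pt lt']] := IH y'; first by lia.
  by exists (y' :: t); rewrite /= my' pt.
by rewrite negb_exists => /forallP H; exists [::].
Qed.

Inductive Reach : N -> Prop :=
| R0 : Reach (ninit G)
| RS m p m' : Reach m -> m \notin B -> m != nfin G -> p \in dom G m ->
    m' \in delta G m (sigma m) p -> Reach m'.

Lemma prefix n : Reach n -> exists p1, path mr (inl (ninit G)) p1 /\ last (inl (ninit G)) p1 = inl n.
Proof.
elim => [|m p m' _ [p1 [P1 L1]] nB nf pd H]; first by exists [::].
exists (rcons (rcons p1 (inr (m, sigma m))) (inl m')).
rewrite !rcons_path !last_rcons P1 L1 /mr /= eqxx nB strat //=; split => //.
by rewrite eqxx /= andbT; apply/existsP; exists p; rewrite pd H.
Qed.

Lemma reach_play n : Reach n -> exists s, fin_play G B sigma s /\ inl n \in inl (ninit G) :: s.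
Proof.
move=> /prefix [p1 [P1 L1]]; have [t [Pt Lt]] := extend (inl n).
exists (p1 ++ t); split; first split.
- by rewrite cat_path P1 L1.
- by rewrite last_cat L1.
by rewrite -cat_cons mem_cat -L1 mem_last.
Qed.

Lemma notB n : Reach n -> n \notin B.
Proof.
move=> /reach_play [s [fp ins]]; case: Hwin => _ [H _].
by move: (H s fp) => /andP [_ /allP /(_ _ ins)].
Qed.

Lemma fin_reached : reached G B sigma (nfin G).
Proof.
have [t [Pt Lt]] := extend (inl (ninit G)).
left; exists t; split => //; case: Hwin => _ [H _].
by case/andP: (H t (conj Pt Lt)).
Qed.

Definition Good (x : position N R) : Prop := match x with
  | inl m => Reach m
  | inr (m, a) => [/\ a = sigma m, Reach m, m \notin B & m != nfin G] end.

Lemma good_step x y : Good x -> mr x y -> Good y.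
Proof.
rewrite /mr; case: x => [m|[m a]]; case: y => [m'|[m' a']] //=.
  move=> Rm /andP [/and3P [/eqP -> nB ao] /eqP [->]].
  by split => //; exact: not_fin_of_out ao.
move=> [-> Rm nB nf] /andP [/andP [ao /existsP [p /andP [pd H]]] _].
exact: RS Rm nB nf pd H.
Qed.

Lemma good_path x s : Good x -> path mr x s -> forall y, y \in x :: s -> Good y.
Proof.
elim: s x => [|z s IH] x Gx /=; first by move=> _ y; rewrite inE => /eqP ->.
case/andP => m P y; rewrite inE => /orP [/eqP -> //|].
exact: IH (good_step Gx m) P y.
Qed.

Lemma reached_Reach n : reached G B sigma n -> Reach n.
Proof.
case=> [[s [[P _] ins]]|[f [[f0 Hf] [i fi]]]].
  by have := good_path (x := inl (ninit G)) R0 P ins.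
have: Good (f i); last by rewrite fi.
elim: i {fi} => [|i IH]; first by rewrite f0; exact: R0.
exact: good_step IH (Hf i).
Qed.

Lemma run_cat C s1 s2 C' : is_run G C (s1 ++ s2) C' <-> exists C1, is_run G C s1 C1 /\ is_run G C1 s2 C'.
Proof.
elim: s1 C => [|[n a] s1 IH] C /=.
  by split => [H|[C1 [-> H]]] //; exists C.
split.
  by case=> en ao /IH [C1 [H1 H2]]; exists C1.
by case=> C1 [[en ao H1] H2]; split => //; apply/IH; exists C1.
Qed.

Lemma moves s C C' p m : is_run G C s C' -> C p = [set m] -> C' p != [set m] ->
  m \in [seq x.1 | x <- s].
Proof.
elim: s C => [|[n a] s IH] C /=; first by move=> -> ->; rewrite eqxx.
case=> en ao H Cp C'p; case: (boolP (p \in dom G n)) => pd.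
  by move/forall_inP: en => /(_ p pd); rewrite Cp inE => /eqP ->; rewrite inE eqxx.
rewrite inE; apply/orP; right; apply: IH H _ C'p.
by rewrite /Defs.next ffunE (negbTE pd).
Qed.

Definition Inv (C : config Proc N) := forall p, exists2 m, C p = [set m] & Reach m.

Definition mu (C : config Proc N) := \sum_(p : Proc) \sum_(m in C p) rank m.

Lemma delta1 n p : n != nfin G -> p \in dom G n -> exists m', delta G n (sigma n) p = [set m'].
Proof. by move=> nf pd; apply/cards1P; rewrite Hdet // strat. Qed.

Lemma run_ex C : Inv C -> (exists s0, is_run G (Cinit G) s0 C) ->
  exists s, is_run G C s (Cfin G) /\ forall x, x \in s -> x.2 = sigma x.1 /\ Reach x.1.
Proof.
have [k Hk] := ubnP (mu C); elim: k C Hk => [//|k IH] C Hk IC [s0 H0].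
case: (classic (exists n, [/\ enabled G C n, Reach n & n != nfin G])).
  move=> [n [en Rn nf]].
  have Cn p : p \in dom G n -> C p = [set n].
    move=> pd; case: (IC p) => m Cp _; move/forall_inP: en => /(_ p pd).
    by rewrite Cp inE => /eqP ->.
  set C' := Defs.next G C n (sigma n).
  have IC' : Inv C'.
    move=> p; rewrite /C' /Defs.next ffunE; case: ifP => pd; last exact: IC.
    have [m' Hm'] := delta1 nf pd; exists m' => //.
    by apply: (RS Rn (notB Rn) nf pd); rewrite Hm' inE.
  have le p : \sum_(m in C' p) rank m <= \sum_(m in C p) rank m ?= iff (p \notin dom G n).
    rewrite /C' /Defs.next ffunE; case: ifP => pd /=; last by apply/leqifP; rewrite eqxx.
    have [m' Hm'] := delta1 nf pd; rewrite Hm' Cn // !big_set1; apply/leqifP.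
    by apply: rank_lt; apply: (edge_of (a := sigma n) (p := p)); rewrite Hm' inE.
  have ltmu : mu C' < mu C.
    have [lem eqm] := @leqif_sum Proc xpredT (fun p => p \notin dom G n) (fun p => \sum_(m in C' p) rank m) (fun p => \sum_(m in C p) rank m) (fun p _ => le p).
    rewrite /mu.
    rewrite ltn_neqAle lem andbT eqm; apply/negP => /forallP.
    case/set0Pn: (dom_ne n) => p pd /(_ p); by rewrite pd.
  have ex' : exists s0, is_run G (Cinit G) s0 C'.
    exists (s0 ++ [:: (n, sigma n)]); apply/run_cat; exists C; split => //=.
    by split => //; apply: strat.
  have [s [Hs Ps]] := IH C' (leq_trans ltmu Hk) IC' ex'.
  exists ((n, sigma n) :: s); split; first by split => //; apply: strat.
  by move=> x; rewrite inE => /orP [/eqP -> //|]; exact: Ps.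
move=> Hno; have [s' Hs'] := Hsound H0.
case: s' Hs' => [/= ->|[n a] s' /= [en ao _]]; first by exists [::].
exfalso; apply: Hno; exists n.
case/set0Pn: (dom_ne n) => p pd.
case: (IC p) => m Cp Rm; move/forall_inP: (en) => /(_ p pd).
rewrite Cp inE => /eqP E; subst m; split => //.
exact: not_fin_of_out ao.
Qed.

Lemma main : exists s : seq (N * R),
    successful_run G s /\
    (forall n : N, (n \in [seq x.1 | x <- s]) || (n == nfin G) <-> reached G B sigma n).
Proof.
have IC0 : Inv (Cinit G) by move=> p; exists (ninit G); rewrite ?ffunE //; exact: R0.
have [s [Hs Ps]] := run_ex IC0 (ex_intro _ [::] erefl).
have fneq p m : m != nfin G -> Cfin G p != [set m].
  move=> nf; rewrite ffunE; apply/negP => /eqP /setP /(_ (nfin G)).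
  by rewrite !inE eqxx eq_sym (negbTE nf).
exists s; split => // n; split.
  case/orP => [/mapP [x xs ->]|/eqP ->]; last exact: fin_reached.
  have [_ Rx] := Ps x xs; have [t Ht] := reach_play Rx.
  by left; exists t.
move=> /reached_Reach Rn; case: (eqVneq n (nfin G)) => [->|nf]; first by rewrite ?eqxx orbT.
apply/orP; left; elim: Rn nf => [|m p m' Rm IH nB nf pd H] nf'.
  case/set0Pn: (dom_ne (ninit G)) => p0 _.
  apply: (moves (p := p0) Hs); first by rewrite ffunE.
  exact: fneq.
have := IH nf => /mapP [[m0 a] xs /= E]; subst m0.
have [/= Ea _] := Ps _ xs; subst a.
move: Hs; case/splitPr: xs => s1 s2 /run_cat [C1 [_ [en ao H2]]].
rewrite map_cat mem_cat /= inE; apply/orP; right; apply/orP; right.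
have [z Hz] := delta1 nf pd; move: H; rewrite Hz inE => /eqP Ez; subst z.
by apply: (moves (p := p) H2); [rewrite /Defs.next ffunE pd | exact: fneq].
Qed.
End Proof.

Theorem lemma4p3 (Proc N R : finType) (G : negotiation Proc N R)
  (B : {set N}) (sigma : N -> R) :
  wf_negotiation G -> sound G -> acyclic G -> deterministic G ->
  winning G B sigma ->
  exists s : seq (N * R),
    successful_run G s /\
    (forall n : N, (n \in [seq x.1 | x <- s]) || (n == nfin G) <-> reached G B sigma n).
Proof. move=> *; exact: main. Qed.
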